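(* Let $n\ge1$, let $\gamma,\beta$ be proper $3$-colorings of the $2\times n$ grid graph $M^*_{2,n}$, and for an even integer $H$ set $y_{i,j}(H)=H+h_{\gamma,v_{1,1}}(\beta,v_{i,j})$ ($i\in\{1,2\}$, $1\le j\le n$). If $H$ is an even integer minimizing $S(H)=\sum_{v\in V(M^*_{2,n})}|H+h_{\gamma,v_{1,1}}(\beta,v)|=\sum_{i=1}^2\sum_{j=1}^n|y_{i,j}(H)|$ over even integers, then at least one of the two median values of the multiset $Y=\{y_{i,j}(H)\}$ (its $n$-th and $(n+1)$-th smallest elements) equals $0$.
   Context: $M^*_{2,n}$ is the grid graph with vertices $v_{i,j}$ ($i\in\{1,2\}$, $1\le j\le n$), $v_{i,j}$ adjacent to $v_{i,j\pm1}$ and $v_{3-i,j}$. Colors lie in $\mathbb{Z}_3$. For a proper $3$-coloring $\gamma$ and an edge traversed from $a$ to $b$, its weight $w(\gamma,\overrightarrow{ab})\in\{1,-1\}$ is congruent to $\gamma(b)-\gamma(a)$ mod $3$; the weight $w(\gamma,P)$ of a directed path is the sum of its edge weights. For any proper $3$-coloring the weight of a directed path from $u$ to $v$ depends only on $u,v$. The relative height is $h_{\gamma,u}(\beta,v)=w(\beta,P_{u,v})-w(\gamma,P_{u,v})$ for any directed path $P_{u,v}$ from $u$ to $v$ (always an even integer). *)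

(* Defs.v *)
From HB Require Import structures.
From mathcomp Require Import all_boot all_order all_algebra.
Set Implicit Arguments. Unset Strict Implicit. Unset Printing Implicit Defensive.
Import Order.TTheory GRing.Theory Num.Theory.
Local Open Scope ring_scope.

(* Vertices of M*_{2,n}: v_{i,j} is (i-1, j-1) : 'I_2 * 'I_n (0-indexed). *)
Definition V (n : nat) := ('I_2 * 'I_n)%type.

Definition row1 : 'I_2 := ord0.
Definition row2 : 'I_2 := ord_max.

Definition adj (n : nat) (u v : V n) : bool :=
  ((u.1 == v.1) && ((u.2.+1 == v.2 :> nat) || (v.2.+1 == u.2 :> nat)))
  || ((u.2 == v.2) && (u.1 != v.1)).

Definition coloring (n : nat) := V n -> 'Z_3.

Definition proper_col (n : nat) (c : coloring n) : Prop :=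
  forall u v : V n, adj u v -> c u != c v.

(* Weight of the edge traversed from a to b: the element of {1,-1}
   congruent to c b - c a mod 3 (for a proper coloring). *)
Definition eweight (n : nat) (c : coloring n) (a b : V n) : int :=
  if c b - c a == 1 then 1 else -1.

Fixpoint pweight (n : nat) (c : coloring n) (x : V n) (s : seq (V n)) : int :=
  match s with
  | [::] => 0
  | y :: s' => eweight c x y + pweight c y s'
  end.

Definition v11 (n : nat) (hn : (0 < n)%N) : V n := (row1, Ordinal hn).

(* A canonical directed path from v_{1,1} to v (listing the vertices after
   v_{1,1}): along row 1 to column of v, then down to row 2 if needed. *)
Definition cpath (n : nat) (v : V n) : seq (V n) :=
  map (fun k : 'I_n => (row1, k))
      (filter (fun k : 'I_n => (0 < k <= v.2)%N) (enum 'I_n))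
  ++ (if v.1 == row2 then [:: v] else [::]).

(* Relative height h_{gamma, v11}(beta, v) = w(beta,P) - w(gamma,P). *)
Definition relheight (n : nat) (hn : (0 < n)%N) (gamma beta : coloring n)
  (v : V n) : int :=
  pweight beta (v11 hn) (cpath v) - pweight gamma (v11 hn) (cpath v).

Definition Ssum (n : nat) (hn : (0 < n)%N) (gamma beta : coloring n) (H : int)
  : int := \sum_(v : 'I_2 * 'I_n) `|H + relheight hn gamma beta v|.

Definition Ysorted (n : nat) (hn : (0 < n)%N) (gamma beta : coloring n)
  (H : int) : seq int :=
  sort (fun a b : int => a <= b)
    [seq H + relheight hn gamma beta v | v <- enum [set: 'I_2 * 'I_n]].

(* Main.v *)
Require Import Defs.
From HB Require Import structures.
From mathcomp Require Import all_boot all_order all_algebra.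
From mathcomp Require Import zify.
Import Order.TTheory GRing.Theory Num.Theory.
Local Open Scope ring_scope.

Definition isneg (y : int) : bool := y < 0.
Definition iszero (y : int) : bool := y == 0.
Definition ispos (y : int) : bool := 0 < y.
Definition isnneg (y : int) : bool := 0 <= y.
Definition isnpos (y : int) : bool := y <= 0.

Lemma sum_shiftP (s : seq int) :
  all (fun y => (2 %| y)%Z) s ->
  \sum_(y <- s) `|y + 2| = \sum_(y <- s) `|y| + 2 * ((count isnneg s)%:Z - (count isneg s)%:Z).
Proof.
elim: s => [|x s IH]; first by rewrite !big_nil.
rewrite /= !big_cons => /andP[hx /IH ->].
rewrite /isnneg /isneg; have [h|h] := leP 0 x; rewrite /=; lia.
Qed.

Lemma sum_shiftN (s : seq int) :
  all (fun y => (2 %| y)%Z) s ->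
  \sum_(y <- s) `|y - 2| = \sum_(y <- s) `|y| + 2 * ((count isnpos s)%:Z - (count ispos s)%:Z).
Proof.
elim: s => [|x s IH]; first by rewrite !big_nil.
rewrite /= !big_cons => /andP[hx /IH ->].
rewrite /isnpos /ispos; have [h|h] := leP x 0; rewrite /=; lia.
Qed.

Lemma opt_shiftP (s : seq int) :
  all (fun y => (2 %| y)%Z) s ->
  \sum_(y <- s) `|y| <= \sum_(y <- s) `|y + 2| -> (count isneg s <= count isnneg s)%N.
Proof. move=> ev; rewrite sum_shiftP //; lia. Qed.

Lemma opt_shiftN (s : seq int) :
  all (fun y => (2 %| y)%Z) s ->
  \sum_(y <- s) `|y| <= \sum_(y <- s) `|y - 2| -> (count ispos s <= count isnpos s)%N.
Proof. move=> ev; rewrite sum_shiftN //; lia. Qed.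

Lemma count3 (p : pred int) (s : seq int) :
  count p s = addn (addn (count p (filter isneg s)) (count p (filter iszero s)))
     (count p (filter ispos s)).
Proof.
elim: s => [|x s IH] //=; rewrite IH.
rewrite /isneg /iszero /ispos; case: (ltgtP x 0) => h /=; lia.
Qed.

Lemma nth_mid (a b c : seq int) (i : nat) :
  b = nseq (size b) 0 -> leq (size a) i -> leq i.+1 (addn (size a) (size b)) -> nth 0 (a ++ b ++ c) i = 0.
Proof.
move=> hb h1 h2; rewrite nth_cat ifF; last by apply/negbTE; rewrite -leqNgt.
rewrite nth_cat ifT; last by rewrite ltn_subLR.
by rewrite hb nth_nseq; case: ifP.
Qed.

Lemma median (s : seq int) (n : nat) :
  size s = (2 * n)%N -> leq (count isneg s) n -> leq (count ispos s) n ->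
  leq 1 (count iszero s) ->
  nth 0 (sort (fun a b : int => a <= b) s) n.-1 = 0 \/ nth 0 (sort (fun a b : int => a <= b) s) n = 0.
Proof.
move=> hs hL hG hZ.
set t := sort _ s.
set t1 : seq int := filter isneg t.
set t2 : seq int := filter iszero t.
set t3 : seq int := filter ispos t.
have tE : t = t1 ++ t2 ++ t3.
  apply: (sorted_eq (@le_trans _ _) (@le_anti _ _)).
  - exact: sort_sorted (@le_total _ _) _.
  - rewrite sorted_pairwise; last exact: le_trans.
    rewrite !pairwise_cat -!sorted_pairwise; try exact: le_trans.
    rewrite !sorted_filter ?sort_sorted //; try exact: le_trans; try exact: le_total.
    rewrite /= ?andbT; apply/andP; split; apply/allrelP => x y.
    + rewrite !mem_filter => /andP[hx _]; rewrite mem_cat !mem_filter.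
      case/orP => /andP[hy _]; move: hx hy; rewrite /isneg /iszero /ispos; lia.
    + rewrite !mem_filter => /andP[hx _] /andP[hy _]; move: hx hy; rewrite /isneg /iszero /ispos; lia.
  - by apply/permP => p; rewrite [LHS](count3 p t) !count_cat addnA.
have ct := count_sort (fun a b : int => a <= b).
have s1 : size t1 = count isneg s by rewrite size_filter ct.
have s2 : size t2 = count iszero s by rewrite size_filter ct.
have s3 : size t3 = count ispos s by rewrite size_filter ct.
have sz : (size t1 + size t2 + size t3)%N = (2 * n)%N.
  by rewrite -hs -(size_sort (fun a b : int => a <= b) s) -/t tE !size_cat addnA.
have t2E : t2 = nseq (size t2) 0 by apply/all_pred1P; apply: filter_all.
rewrite -s1 in hL; rewrite -s2 in hZ; rewrite -s3 in hG.
rewrite tE.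
have [hl|hl] := ltnP (size t1) n.
- left; apply: nth_mid => //; lia.
- right; apply: nth_mid => //; lia.
Qed.

Lemma counts (s : seq int) :
  [/\ addn (addn (count isneg s) (count iszero s)) (count ispos s) = size s,
      count isnneg s = addn (count iszero s) (count ispos s) &
      count isnpos s = addn (count isneg s) (count iszero s)].
Proof.
elim: s => [|x s [IH1 IH2 IH3]] //=.
rewrite /isneg /iszero /ispos /isnneg /isnpos -/isneg -/iszero -/ispos -/isnneg -/isnpos.
case: (ltgtP x 0) => h /=; split; lia.
Qed.

Lemma pweight_rcons (n : nat) (c : coloring n) x s z :
  pweight c x (rcons s z) = pweight c x s + eweight c (last x s) z.
Proof.
elim: s x => [|w s IH] x /=; first by rewrite addr0 add0r.
by rewrite IH addrA.
Qed.

Lemma ediff (n : nat) (c1 c2 : coloring n) a b : `|eweight c1 a b - eweight c2 a b| <= 2.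
Proof. rewrite /eweight; case: ifP => _; case: ifP => _; lia. Qed.

Lemma pdiff_even (n : nat) (c1 c2 : coloring n) x s : (2 %| pweight c1 x s - pweight c2 x s)%Z.
Proof.
elim: s x => [|z s IH] x //=.
have := IH z; rewrite /eweight; case: ifP => _; case: ifP => _; lia.
Qed.

Lemma relheight_even (n : nat) (hn : (0 < n)%N) g b v : (2 %| relheight hn g b v)%Z.
Proof. exact: pdiff_even. Qed.

Lemma relheight_step (n : nat) (hn : (0 < n)%N) g b v v' z :
  cpath v' = rcons (cpath v) z -> `|relheight hn g b v' - relheight hn g b v| <= 2.
Proof.
move=> E; rewrite /relheight E !pweight_rcons.
have := @ediff n b g (last (v11 hn) (cpath v)) z; lia.
Qed.

Lemma cpath_row2 (n : nat) (k : 'I_n) : cpath (Defs.row2, k) = rcons (cpath (Defs.row1, k)) (Defs.row2, k).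
Proof. by rewrite /cpath /= cats0 cats1. Qed.

Lemma filter_iota (m n : nat) : (m < n)%N -> [seq k <- iota 0 n | (0 < k <= m)%N] = iota 1 m.
Proof.
move=> hm; rewrite -(subnK hm) addnC iotaD filter_cat /=.
have -> : [seq k <- iota 1 m | (0 < k <= m)%N] = iota 1 m.
  by apply/all_filterP; apply/allP => k; rewrite mem_iota; lia.
rewrite (eq_in_filter (a2 := pred0)) ?filter_pred0 ?cats0 // => k.
rewrite mem_iota /= => hk; apply/negbTE; lia.
Qed.

Lemma Qval (n : nat) (j : 'I_n) :
  map val [seq k : 'I_n <- enum 'I_n | (0 < k <= j)%N] = iota 1 j.
Proof.
have -> : map val [seq k : 'I_n <- enum 'I_n | (0 < k <= j)%N] = [seq k <- map val (enum 'I_n) | (0 < k <= j)%N].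
  by rewrite filter_map.
by rewrite val_enum_ord filter_iota.
Qed.

Lemma cpath_row1 (n k : nat) (hk : (k < n)%N) (hk' : (k.+1 < n)%N) :
  cpath (Defs.row1, Ordinal hk') = rcons (cpath (Defs.row1, Ordinal hk)) (Defs.row1, Ordinal hk').
Proof.
rewrite /cpath /= !cats0 -map_rcons; congr map.
apply: (inj_map val_inj); rewrite map_rcons (@Qval n (Ordinal hk')) (@Qval n (Ordinal hk)).
change (iota 1 k.+1 = rcons (iota 1 k) k.+1).
by rewrite -cats1 -[k.+1]addn1 iotaD add1n addn1.
Qed.

Lemma ivt0 (f : nat -> int) a d :
  (forall k, (a <= k)%N -> (k < a + d)%N -> `|f k.+1 - f k| <= 2) ->
  (forall k, (2 %| f k)%Z) -> f a <= 0 -> 0 <= f (a + d)%N ->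
  exists k, (a <= k <= a + d)%N /\ f k = 0.
Proof.
elim: d a => [|d IH] a hs he h0 h1.
  by exists a; rewrite addn0 in h1 *; split; lia.
have [h|h] := leP (f a.+1) 0.
  have [k [hk fk]] : exists k, (a.+1 <= k <= a.+1 + d)%N /\ f k = 0.
    apply: IH => //; last by rewrite addSnnS.
    move=> k hk1 hk2; apply: hs; lia.
  by exists k; split => //; lia.
exists a; split; first lia.
have := hs a (leqnn a) ltac:(lia); have := he a; have := he a.+1; lia.
Qed.

Lemma ivt (f : nat -> int) m i j : (i < m)%N -> (j < m)%N ->
  (forall k, (k.+1 < m)%N -> `|f k.+1 - f k| <= 2) ->
  (forall k, (2 %| f k)%Z) -> f i <= 0 -> 0 <= f j -> exists k, (k < m)%N /\ f k = 0.
Proof.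
move=> hi hj hs he fi fj.
have [hij|hij] := leqP i j.
  have [k [hk fk]] := @ivt0 f i (j - i) ltac:(move=> k h1 h2; apply: hs; lia) he fi
     ltac:(by rewrite (subnKC hij)).
  by exists k; split => //; lia.
have [k [hk fk]] := @ivt0 (fun k => - f k) j (i - j)
   ltac:(move=> k h1 h2; have := hs k ltac:(lia); lia)
   ltac:(move=> k; have := he k; lia) ltac:(lia)
   ltac:(rewrite (subnKC (ltnW hij)); lia).
by exists k; split; lia.
Qed.

Theorem lemma5p7 (n : nat) (hn : (0 < n)%N) (gamma beta : coloring n)
  (Hg : proper_col gamma) (Hb : proper_col beta) (H : int) :
  (2 %| H)%Z ->
  (forall H' : int, (2 %| H')%Z -> Ssum hn gamma beta H <= Ssum hn gamma beta H') ->
  nth 0 (Ysorted hn gamma beta H) n.-1 = 0 \/ nth 0 (Ysorted hn gamma beta H) n = 0.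
Proof.
move=> H2 Hopt.
pose o := Ordinal hn.
pose y := fun v : V n => H + relheight hn gamma beta v.
pose f := fun k : nat => y (Defs.row1, insubd o k).
have fE : forall k (hk : (k < n)%N), f k = y (Defs.row1, Ordinal hk).
  move=> k hk; rewrite /f; congr (y (_, _)); apply: val_inj.
  by rewrite val_insubd /= hk.
have yev : forall v, (2 %| y v)%Z.
  by move=> v; have := @relheight_even n hn gamma beta v; rewrite /y; lia.
have fstep : forall k, (k.+1 < n)%N -> `|f k.+1 - f k| <= 2.
  move=> k hk; have hk0 : (k < n)%N by lia.
  rewrite (fE _ hk) (fE _ hk0) /y.
  have := @relheight_step n hn gamma beta _ _ _ (@cpath_row1 n k hk0 hk); lia.
have near : forall v, `|y v - f v.2| <= 2.
  move=> [i k] /=; rewrite (fE _ (ltn_ord k)).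
  have -> : Ordinal (ltn_ord k) = k by apply: val_inj.
  have [->|->] : i = Defs.row1 \/ i = Defs.row2.
    by case: i => [[|[|m]] hi]; [left|right|done]; apply: val_inj.
    by rewrite subrr normr0.
  rewrite /y; have := @relheight_step n hn gamma beta _ _ _ (@cpath_row2 n k); lia.
have Z0 : forall u w, y u <= 0 -> 0 <= y w -> exists v, y v = 0.
  move=> u w hu hw.
  have := near u; have := near w; have := yev u; have := yev w.
  have := yev (Defs.row1, insubd o u.2); have := yev (Defs.row1, insubd o w.2).
  rewrite -/(f u.2) -/(f w.2) => efw efu ew eu nw nu.
  have [hfu|hfu] := leP (f u.2) 0; last by exists u; lia.
  have [hfw|hfw] := leP 0 (f w.2); last by exists w; lia.
  have [k [hk fk]] := @ivt f n u.2 w.2 (ltn_ord _) (ltn_ord _) fstep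
     (fun k => yev _) hfu hfw.
  by exists (Defs.row1, insubd o k).
pose s := [seq H + relheight hn gamma beta v | v <- enum [set: 'I_2 * 'I_n]].
have -> : Ysorted hn gamma beta H = sort (fun a b : int => a <= b) s by [].
have hs : @size int s = (2 * n)%N.
  by rewrite size_map -cardE cardsT card_prod !card_ord.
have ev : all (fun x => (2 %| x)%Z) s.
  by apply/allP => x /mapP [v _ ->]; exact: yev.
have SE : forall c, Ssum hn gamma beta (H + c) = \sum_(x <- s) `|x + c|.
  move=> c; rewrite /Ssum big_map big_enum /=.
  apply: eq_big => [v|v _]; first by rewrite in_setT.
  by rewrite addrAC.
have E0 : Ssum hn gamma beta H = \sum_(x <- s) `|x|.
  rewrite -{1}[H]addr0 SE; apply: eq_bigr => x _; by rewrite addr0.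
have hP := Hopt (H + 2) ltac:(lia).
rewrite E0 SE in hP; have {}hP := @opt_shiftP s ev hP.
have hN := Hopt (H + -2) ltac:(lia).
rewrite E0 SE in hN; have {}hN := @opt_shiftN s ev hN.
have [c1 c2 c3] := counts s.
have memv : forall v, y v \in s.
  by move=> v; apply/mapP; exists v => //; rewrite mem_enum in_setT.
have hz : (0 < count iszero s)%N.
  rewrite -has_count.
  have [v hv] : exists v, y v = 0.
    have [hz0|hz0] := posnP (count iszero s).
      have : has isneg s by rewrite has_count; lia.
      case/hasP => x /mapP [u _ ->] hu.
      have : has ispos s by rewrite has_count; lia.
      case/hasP => x' /mapP [w _ ->] hw.
      apply: (Z0 u w); move: hu hw; rewrite /isneg /ispos /y; lia.
    move: hz0; rewrite -has_count => /hasP [x /mapP [v _ ->] hx].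
    by exists v; move: hx; rewrite /iszero => /eqP.
  by apply/hasP; exists (y v); rewrite ?memv // /iszero hv.
apply: median => //; lia.
Qed.
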